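(* Consider a single-server FIFO system in a packet-switched network consisting of a work-conserving link of constant bit rate $c>0$ (bits per unit time), with infinite buffer and initially empty, fed by an input flow of packets of positive length. Let $A(t)$ and $A^{*}(t)$ be the cumulative input and output traffic (in bits) up to time $t$ (excluded), counted at the packet level as described in the context. Then $\beta(t)=ct$ is neither a strict service curve nor a service curve of this system; that is, there exist input flows for which the strict service curve inequality fails for $\beta(t)=ct$, and there exist input flows and times $t\ge 0$ with $A^{*}(t) < \inf_{0\le s\le t}\{A(s)+c(t-s)\}$.
   Context: Packets are indexed $n=1,2,\dots$, with arrival time $a(n)$, departure time $d(n)$ and length $l(n)>0$ bits. By convention, a packet is said to have arrived (respectively, been served) when and only when its last bit has arrived (respectively, departed). $A(t)$ denotes the cumulative amount of traffic (sum of lengths of packets) that has arrived in $[0,t)$, and $A^{*}(t)$ the cumulative amount of traffic that has been served (departed) in $[0,t)$; $A(0)=A^{*}(0)=0$, $A(s,t)=A(t)-A(s)$, $A^{*}(s,t)=A^{*}(t)-A^{*}(s)$. Let $\mathcal{F}_0$ be the set of nonnegative nondecreasing functions $f$ with $f(0)=0$. A function $\beta\in\mathcal{F}_0$ is a service curve of the system if for all $t\ge0$, $A^{*}(t)\ge \inf_{0\le s\le t}\{A(s)+\beta(t-s)\}$. A function $\beta\in\mathcal{F}_0$ is a strict service curve if during any backlogged period $(s,t]$ (a period during which there is always traffic that has arrived but not yet been served), $A^{*}(s,t)\ge\beta(t-s)$. The link is work-conserving: whenever the system is backlogged it transmits bits at rate $c$. *)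

(* Defs.v *)
From HB Require Import structures.
From mathcomp Require Import all_boot all_order all_algebra.
From mathcomp Require Import boolp classical_sets reals.
Set Implicit Arguments. Unset Strict Implicit. Unset Printing Implicit Defensive.
Import Order.TTheory GRing.Theory Num.Theory.
Local Open Scope ring_scope.
Local Open Scope classical_set_scope.

(* A (finite) input flow: N packets, indexed 0..N-1 (packet n+1 of the paper is
   index n here), with arrival times a i (time the last bit arrives) and lengths
   l i > 0 bits, arriving in FIFO order. *)
Definition valid_flow (R : realType) (N : nat) (a l : nat -> R) : Prop :=
  (forall i, (i < N)%N -> 0 <= a i /\ 0 < l i) /\
  (forall i j, (i <= j)%N -> (j < N)%N -> a i <= a j).

Fixpoint departure (R : realType) (c : R) (a l : nat -> R) (n : nat) : R :=
  match n with
  | O => a O + l O / c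
  | n'.+1 => Num.max (a n) (departure c a l n') + l n / c
  end.

Definition cumA (R : realType) (N : nat) (a l : nat -> R) (t : R) : R :=
  \sum_(i < N | a i < t) l i.

Definition cumAstar (R : realType) (c : R) (N : nat) (a l : nat -> R) (t : R) : R :=
  \sum_(i < N | departure c a l i < t) l i.

Definition backlogged (R : realType) (c : R) (N : nat) (a l : nat -> R) (u : R) : Prop :=
  cumAstar c N a l u < cumA N a l u.

Definition service_curve_for (R : realType) (c : R) (N : nat) (a l : nat -> R)
  (beta : R -> R) : Prop :=
  forall t, 0 <= t ->
    inf [set cumA N a l s + beta (t - s) | s in [set s | 0 <= s <= t]]
      <= cumAstar c N a l t.

Definition strict_service_curve_for (R : realType) (c : R) (N : nat) (a l : nat -> R)
  (beta : R -> R) : Prop :=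
  forall s t, 0 <= s -> s <= t ->
    (forall u, s < u -> u <= t -> backlogged c N a l u) ->
    beta (t - s) <= cumAstar c N a l t - cumAstar c N a l s.

(* Main.v *)
Require Import Defs.
From HB Require Import structures.
From mathcomp Require Import all_boot all_order all_algebra.
From mathcomp Require Import boolp classical_sets reals.
Import Order.TTheory GRing.Theory Num.Theory.
Local Open Scope ring_scope.
Local Open Scope classical_set_scope.


Theorem proposition2 (R : realType) (c : R) (hc : 0 < c) :
  (exists (N : nat) (a l : nat -> R), valid_flow N a l /\
     ~ strict_service_curve_for c N a l (fun u => c * u)) /\
  (exists (N : nat) (a l : nat -> R), valid_flow N a l /\
     exists t : R, 0 <= t /\
       cumAstar c N a l t <
         inf [set cumA N a l s + c * (t - s) | s in [set s | 0 <= s <= t]]).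
Proof.
have cn : c != 0 by rewrite gt_eqF.
have vf : valid_flow 1 (fun _ => 0 : R) (fun _ => 1).
  by split => [i _|i j _ _] //; split; rewrite ?lexx ?ltr01.
have dep : departure c (fun _ => 0 : R) (fun _ => 1) 0 = c^-1 by rewrite /= add0r mul1r.
have ci : 0 < c^-1 by rewrite invr_gt0.
have As : cumAstar c 1 (fun _ => 0 : R) (fun _ => 1) c^-1 = 0.
  by rewrite /cumAstar big_mkcond big_ord1 dep ltxx.
split.
  exists 1%N, (fun _ => 0), (fun _ => 1); split => // H.
  have Hb : forall u, 0 < u -> u <= c^-1 -> backlogged c 1 (fun _ => 0 : R) (fun _ => 1) u.
    move=> u u0 ut.
    rewrite /backlogged /cumAstar /cumA !big_mkcond !big_ord1 dep u0 (ltNge c^-1 u) ut /=.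
    by rewrite big_ord1 ltr01.
  have := H 0 c^-1 (lexx 0) (ltW ci) Hb.
  have -> : cumAstar c 1 (fun _ => 0 : R) (fun _ => 1) 0 = 0.
    by rewrite /cumAstar big_mkcond big_ord1 dep ltNge (ltW ci).
  by rewrite As subr0 subr0 divff // ler10.
exists 1%N, (fun _ => 0), (fun _ => 1); split => //.
exists c^-1; split; first exact: ltW.
rewrite As.
apply: (lt_le_trans ltr01); apply: lb_le_inf.
  by exists (cumA 1 (fun _ => 0 : R) (fun _ => 1) 0 + c * (c^-1 - 0)), 0 => //; apply/andP; split; [exact: lexx | exact: ltW].
move=> _ [s /andP[s0 st] <-].
rewrite /cumA big_mkcond big_ord1.
have [s0'|] := ltP 0 s.
  by rewrite lerDl; apply: mulr_ge0; [exact: ltW | rewrite subr_ge0].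
move=> sle; have -> : s = 0 by apply/eqP; rewrite eq_le sle s0.
by rewrite add0r subr0 divff.
Qed.
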